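(* Let $\emptyset\neq A\subseteq L^0(E)$ and $1\le s\le p<\infty$. Then: (1) if $\operatorname{chcd}_pA\neq\emptyset$, then $\operatorname{chcd}_0\operatorname{chcd}_pA=\operatorname{chcd}_0A$; (2) $\operatorname{chcd}_p\operatorname{chcd}_0A=\operatorname{chcd}_pA$; (3) $\operatorname{chcd}_p\operatorname{chcd}_pA=\operatorname{chcd}_pA$; (4) $\operatorname{chcd}_p\operatorname{chcd}_sA=\operatorname{chcd}_pA$; (5) if $\operatorname{chcd}_pA\neq\emptyset$, then $\operatorname{chcd}_s\operatorname{chcd}_pA=\operatorname{chcd}_sA$.
   Context: $E$ is a separable Banach space; $(\Omega,\mathcal F,\mathbb P)$ a complete probability space; $L^0(E)$ the a.s.-classes of $E$-valued random variables, $L^q(E)=\{\xi:\mathbb E|\xi|^q<\infty\}$. $\operatorname{chcd}_0$ is the $0$-Choquet convex decomposable hull operator on subsets of $L^0(E)$: for nonempty $B\subseteq L^0(E)$, $\operatorname{chcd}_0B=\operatorname{cl}_0\operatorname{dec}\operatorname{conv}B$, the closure in probability of the set of finite decompositions $\sum_{i=1}^m1_{C_i}\xi_i$ ($(C_i)$ a measurable partition of $\Omega$) of elements $\xi_i$ of the convex hull of $B$, and $\operatorname{chcd}_0\emptyset=\emptyset$; it is extensive, monotone and idempotent. For $q\in[1,\infty)$ and any $B\subseteq L^0(E)$, the (extended) $q$-Choquet convex decomposable hull is $\operatorname{chcd}_qB:=\operatorname{chcd}_0B\cap L^q(E)$ (for $B\subseteq L^q(E)$ this agrees with $\operatorname{cl}_q\operatorname{dec}\operatorname{conv}B$,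 closure in $L^q$-norm). *)

(* Defs.v *)
From HB Require Import structures.
From mathcomp Require Import all_boot all_order all_algebra.
From mathcomp Require Import all_classical all_reals all_analysis.
Set Implicit Arguments. Unset Strict Implicit. Unset Printing Implicit Defensive.
Import Order.TTheory GRing.Theory Num.Theory.
Import numFieldNormedType.Exports.
Local Open Scope classical_set_scope.
Local Open Scope ring_scope.

Section ChoquetHulls.
Context {R : realType} {E : normedModType R} {d : measure_display}
  {Omega : measurableType d} (P : probability Omega R).

Definition borel_meas (f : Omega -> E) : Prop :=
  forall U : set E, open U -> measurable (f @^-1` U).

(* L^0(E), represented by (Borel) measurable representatives. *)
Definition L0 : set (Omega -> E) := [set f | borel_meas f].

Definition Lq (q : R) : set (Omega -> E) :=
  [set f | borel_meas f /\ (\int[P]_x ((`|f x| `^ q)%:E) < +oo)%E].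

(* convex hull: finite convex combinations with deterministic weights *)
Definition convh (B : set (Omega -> E)) : set (Omega -> E) :=
  [set f | exists (n : nat) (lam : 'I_n -> R) (xi : 'I_n -> Omega -> E),
     [/\ (forall i, 0 <= lam i), \sum_(i < n) lam i = 1,
         (forall i, B (xi i)) &
         f = (fun x => \sum_(i < n) lam i *: xi i x)]].

Definition dech (B : set (Omega -> E)) : set (Omega -> E) :=
  [set f | exists (m : nat) (C : 'I_m -> set Omega) (xi : 'I_m -> Omega -> E),
     [/\ (forall i, measurable (C i)),
         (forall i j, i != j -> C i `&` C j = set0),
         (forall x, exists i, C i x),
         (forall i, B (xi i)) &
         f = (fun x => \sum_(i < m) (\1_(C i) x : R) *: xi i x)]].

Definition cvg_prob (u : nat -> Omega -> E) (f : Omega -> E) : Prop :=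
  forall e : R, 0 < e ->
    (fun n => P [set x | e < `|u n x - f x|]) @ \oo --> 0%E.

(* closure in probability inside L^0(E) (L^0 is metrizable, so the closure
   is the sequential closure) *)
Definition cl0 (B : set (Omega -> E)) : set (Omega -> E) :=
  [set f | L0 f /\ exists u : nat -> Omega -> E,
     (forall n, B (u n)) /\ cvg_prob u f].

(* 0-Choquet convex decomposable hull (gives set0 on set0 automatically) *)
Definition chcd0 (B : set (Omega -> E)) : set (Omega -> E) :=
  cl0 (dech (convh B)).

Definition chcdq (q : R) (B : set (Omega -> E)) : set (Omega -> E) :=
  chcd0 B `&` Lq q.

End ChoquetHulls.

(* Main.v *)
Require Import Defs.
From HB Require Import structures.
From mathcomp Require Import all_boot all_order all_algebra.
From mathcomp Require Import all_classical all_reals all_analysis.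
From mathcomp Require Import measurable_realfun ring lra.
Import Order.TTheory GRing.Theory Num.Theory.
Import numFieldNormedType.Exports.
Local Open Scope classical_set_scope.
Local Open Scope ring_scope.

Section Meas.
Context {R : realType} {E : normedModType R} {d : measure_display}
  {Omega : measurableType d}.

Lemma ballE (a : E) (r : R) : ball a r = [set y | `|a - y| < r].
Proof. by rewrite -ball_normE. Qed.

Lemma openB (a : E) (r : R) : open [set y | `|a - y| < r].
Proof. rewrite -ballE; exact: ball_open. Qed.

Lemma L0_comp (f : Omega -> E) (h : E -> E) :
  L0 f -> continuous h -> L0 (fun x => h (f x)).
Proof. by move=> mf /continuousP ch U oU; exact: (mf _ (ch _ oU)). Qed.

Lemma L0Z (k : R) (f : Omega -> E) : L0 f -> L0 (fun x => k *: f x).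
Proof. by move=> mf; apply: (@L0_comp f (fun y => k *: y)) => //; exact: scaler_continuous. Qed.

Lemma L0N (f : Omega -> E) : L0 f -> L0 (fun x => - f x).
Proof. by move=> mf; apply: (@L0_comp f (fun y => - y)) => //; exact: opp_continuous. Qed.

Lemma L0cst (c : E) : L0 (fun _ : Omega => c).
Proof.
move=> U _; have [Uc|Uc] := pselect (U c).
  by rewrite (_ : _ @^-1` _ = setT) //; apply/seteqP; split.
by rewrite (_ : _ @^-1` _ = set0) //; apply/seteqP; split.
Qed.

Definition paste (C : set Omega) (f g : Omega -> E) :=
  fun x => if `[< C x >] then f x else g x.

Lemma L0paste C f g : measurable C -> L0 f -> L0 g -> L0 (paste C f g).
Proof.
move=> mC mf mg U oU.
rewrite (_ : _ @^-1` _ = (C `&` f @^-1` U) `|` (~` C `&` g @^-1` U)).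
  by apply: measurableU; apply: measurableI => //; [exact: mf| exact: measurableC| exact: mg].
apply/seteqP; split => x /=; rewrite /paste.
  by case: asboolP => xC Ux; [left|right].
by case => -[xC Ux]; case: asboolP.
Qed.

Lemma L0_ball (f : Omega -> E) (a : E) (r : R) :
  L0 f -> measurable [set x | `|a - f x| < r].
Proof. by move=> mf; exact: (mf _ (openB a r)). Qed.

Lemma L0_norm_meas (f : Omega -> E) : L0 f -> measurable_fun setT (fun x => `|f x|).
Proof.
move=> mf; apply: (measurability _ (measurable_realfun.RGenOpens.measurableE R)).
move=> _ [_ [a [b ->] <-]]; rewrite setTI.
have o : open ((@Num.Def.normr R E) @^-1` `]a, b[%classic).
  by move: (@norm_continuous R E) => /continuousP; apply; exact: interval_open.
exact: (mf _ o).
Qed.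

Context (hsep : exists D : set E, countable D /\ dense D).

Lemma dense_seq : exists e : nat -> E, forall x (r : R), 0 < r -> exists i, `|e i - x| < r.
Proof.
case: hsep => D [cD dD].
have [x0 Dx0] : D !=set0.
  have [x [_ Dx]] := dD setT (ex_intro _ 0 I) openT; by exists x.
case/countable_injP: cD => f finj.
exists (fun n => xget x0 [set x | D x /\ f x = n]) => x r r0.
have [y [yb Dy]] : (ball x r `&` D) !=set0.
  by apply: dD; [exists x; exact: ballxx | exact: ball_open].
exists (f y).
have [Dz fz] := @xgetPex _ x0 [set x | D x /\ f x = f y] (ex_intro _ y (conj Dy erefl)).
rewrite (finj _ _ _ _ fz) ?inE //.
by move: yb; rewrite ballE /= -normrN opprB.
Qed.

Lemma small_inv (e : R) : 0 < e -> exists k : nat, k.+1%:R^-1 < e.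
Proof. move=> e0; have [N _ hN] := near_infty_natSinv_lt (PosNum e0); exists N; exact: (hN N (leqnn N)). Qed.

Lemma L0D (f g : Omega -> E) : L0 f -> L0 g -> L0 (fun x => f x + g x).
Proof.
move=> mf mg U oU.
have [e he] := dense_seq.
pose r (k : nat) : R := k.+1%:R^-1.
pose cond (t : nat * nat * nat) := forall y z, `|e t.1.1 - y| < r t.2 ->
   `|e t.1.2 - z| < r t.2 -> U (y + z).
pose F (t : nat * nat * nat) := [set x | cond t /\ `|e t.1.1 - f x| < r t.2 /\
    `|e t.1.2 - g x| < r t.2].
have -> : (fun x => f x + g x) @^-1` U = \bigcup_t F t.
  apply/seteqP; split => [x /= Ux | x [t _ [H [h1 h2]]]]; last by apply: H.
  have : nbhs (f x + g x) U by apply: open_nbhs_nbhs; split. rewrite /= -nbhs_ballE => -[eps /= eps0].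
  rewrite ballE => sU.
  have [k hk] := small_inv _ (divr_gt0 eps0 (ltr0n R 4)).
  have rk0 : 0 < r k by rewrite /r invr_gt0 ltr0n.
  have [i hi] := he (f x) _ rk0; have [j hj] := he (g x) _ rk0.
  exists (i, j, k) => //; split => /=; last first.
    by split.
  move=> y z hy hz; apply: sU => /=.
  have -> : f x + g x - (y + z) = ((f x - e i) + (e i - y)) + ((g x - e j) + (e j - z)).
    by rewrite !subrKA opprD addrACA.
  apply: (le_lt_trans (ler_normD _ _)).
  have -> : eps = (eps / 4 + eps / 4) + (eps / 4 + eps / 4).
    by field.
  have hl u v : `|u| < r k -> `|v| < r k -> `|u + v| < eps / 4 + eps / 4.
    move=> hu hv; apply: (le_lt_trans (ler_normD _ _)).
    by apply: ltrD; apply: (lt_trans _ hk).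
  apply: ltrD; apply: hl => //; by rewrite -normrN opprB.
apply: countable_bigcupT_measurable => // t.
have [c|nc] := pselect (cond t).
  rewrite (_ : F t = [set x | `|e t.1.1 - f x| < r t.2] `&` [set x | `|e t.1.2 - g x| < r t.2]).
    by apply: measurableI; apply: L0_ball.
  by apply/seteqP; split => x /=; [case=> _ [] | case=> ? ?].
by rewrite (_ : F t = set0) //; apply/seteqP; split => x // [].
Qed.

Lemma L0B (f g : Omega -> E) : L0 f -> L0 g -> L0 (fun x => f x - g x).
Proof. by move=> mf mg; apply: L0D => //; exact: L0N. Qed.

Lemma L0_sum (I : Type) (s : seq I) (Q : pred I) (F : I -> Omega -> E) :
  (forall i, L0 (F i)) -> L0 (fun x => \sum_(i <- s | Q i) F i x).
Proof.
move=> mF; elim: s => [|i s IH].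
  by under [fun x => _]funext => x do rewrite big_nil; exact: L0cst.
case: (boolP (Q i)) => Qi.
  under [fun x => _]funext => x do rewrite big_cons Qi.
  exact: L0D.
by under [fun x => _]funext => x do rewrite big_cons (negbTE Qi).
Qed.

End Meas.

Section Alg.
Context {R : realType} {E : normedModType R} {d : measure_display}
  {Omega : measurableType d}.
Implicit Types (B S : set (Omega -> E)) (f g : Omega -> E).

Lemma indic_in (C : set Omega) x : C x -> (\1_C x : R) = 1.
Proof. by move=> Cx; rewrite indicE mem_set. Qed.

Lemma indic_out (C : set Omega) x : ~ C x -> (\1_C x : R) = 0.
Proof. by move=> Cx; rewrite indicE memNset. Qed.

Lemma dec_value (I : finType) (C : I -> set Omega) (xi : I -> Omega -> E) x i0 :
  (forall i j, i != j -> C i `&` C j = set0) -> C i0 x ->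
  \sum_i (\1_(C i) x : R) *: xi i x = xi i0 x.
Proof.
move=> disj Ci0; rewrite (bigD1 i0) //= indic_in // scale1r big1 ?addr0 //.
move=> j ji0; rewrite indic_out ?scale0r //.
move=> Cj; have := disj _ _ ji0; rewrite -subset0 => /(_ x) h.
by apply: h; split.
Qed.

Lemma bev (V : zmodType) (I : finType) (F : I -> V) :
  \sum_i F i = \sum_(k < #|I|) F (enum_val k).
Proof. rewrite -[RHS](big_enum_val _). by apply: eq_bigl => i; rewrite inE. Qed.

Lemma convhI B (I : finType) (lam : I -> R) (xi : I -> Omega -> E) :
  (forall i, 0 <= lam i) -> \sum_i lam i = 1 -> (forall i, B (xi i)) ->
  convh B (fun x => \sum_i lam i *: xi i x).
Proof.
move=> l0 l1 Bxi; exists #|I|, (fun k => lam (enum_val k)), (fun k => xi (enum_val k)).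
split => //.
- by rewrite -bev.
- by apply: funext => x; rewrite bev.
Qed.

Lemma dechI B (I : finType) (C : I -> set Omega) (xi : I -> Omega -> E) f :
  (forall i, measurable (C i)) -> (forall i j, i != j -> C i `&` C j = set0) ->
  (forall x, exists i, C i x) -> (forall i, B (xi i)) ->
  (forall i x, C i x -> f x = xi i x) -> dech B f.
Proof.
move=> mC disj cov Bxi agr.
exists #|I|, (fun k => C (enum_val k)), (fun k => xi (enum_val k)); split => //.
- by move=> i j ij; apply: disj; apply: contra ij => /eqP /enum_val_inj ->.
- by move=> x; have [i Ci] := cov x; exists (enum_rank i); rewrite enum_rankK.
- apply: funext => x; have [i Ci] := cov x.
  rewrite (agr _ _ Ci).
  rewrite -(@bev _ I (fun j => (\1_(C j) x : R) *: xi j x)).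
  by rewrite (dec_value _ _ xi x i disj Ci).
Qed.

Definition binconv S := forall f g (t : R), S f -> S g -> 0 <= t <= 1 ->
  S (fun x => t *: f x + (1 - t) *: g x).

Definition bindec S := forall (C : set Omega) f g, measurable C -> S f -> S g ->
  S (paste C f g).

Lemma ord_split m (i : 'I_m.+1) : i = ord_max \/ exists j : 'I_m, i = widen_ord (leqnSn m) j.
Proof.
have [->|ne] := eqVneq i ord_max; [by left|right].
have lt : (i < m)%N.
  by have := ltn_ord i; rewrite ltnS leq_eqVlt; case/orP => // /eqP h; case/eqP: ne; apply: val_inj.
by exists (Ordinal lt); apply: val_inj.
Qed.

Lemma binconv_convh S : binconv S -> convh S `<=` S.
Proof.
move=> bS f [n [lam [xi [l0 l1 Sxi ->]]]].
elim: n lam xi l0 l1 Sxi => [|n IH] lam xi l0 l1 Sxi.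
  by move: l1; rewrite big_ord0 => /esym/eqP; rewrite oner_eq0.
move: l1; rewrite big_ord_recr /= => l1.
set t := lam ord_max in l1.
have rest0 : 0 <= \sum_(i < n) lam (widen_ord (leqnSn n) i) by apply: sumr_ge0.
have [t1|t1] := eqVneq t 1.
  have z : forall i : 'I_n, lam (widen_ord (leqnSn n) i) = 0.
    have h : \sum_(i < n) lam (widen_ord (leqnSn n) i) = 0.
      by move: l1; rewrite t1 => /(congr1 (fun z => z - 1)); rewrite addrK subrr.
    by move=> i; apply: (psumr_eq0P _ h) => // j _; exact: l0.
  rewrite (_ : (fun x => _) = xi ord_max) //; apply: funext => x.
  rewrite big_ord_recr /= big1 ?add0r; first by rewrite -/t t1 scale1r.
  by move=> i _; rewrite z scale0r.
have tle : t <= 1 by rewrite -l1 lerDr.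
have tlt : t < 1 by rewrite lt_neqAle t1 tle.
set s := 1 - t.
have s0 : 0 < s by rewrite subr_gt0.
pose g := fun x => \sum_(i < n) (lam (widen_ord (leqnSn n) i) / s) *: xi (widen_ord (leqnSn n) i) x.
have Sg : S g.
  apply: IH => //.
  - by move=> i; apply: divr_ge0 => //; exact: ltW.
  - rewrite -mulr_suml; have -> : \sum_(i < n) lam (widen_ord (leqnSn n) i) = s.
      by rewrite /s -l1 addrK.
    by rewrite divff // gt_eqF.
rewrite (_ : (fun x => _) = fun x => s *: g x + (1 - s) *: xi ord_max x).
  apply: bS => //; apply/andP; split; first exact: ltW.
  by rewrite /s lerBlDr lerDl; exact: l0.
apply: funext => x; rewrite big_ord_recr /= /g scaler_sumr.
congr (_ + _); last by rewrite /s opprB addrC subrK.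
apply: eq_bigr => i _; rewrite scalerA mulrCA mulfV ?mulr1 //.
by rewrite gt_eqF.
Qed.

End Alg.

Section Alg2.
Context {R : realType} {E : normedModType R} {d : measure_display}
  {Omega : measurableType d}.
Implicit Types (B S : set (Omega -> E)) (f g : Omega -> E).

Lemma bindec_step S : bindec S -> forall m (C : 'I_m -> set Omega) (xi : 'I_m -> Omega -> E) h f,
  (forall i, measurable (C i)) -> (forall i j, i != j -> C i `&` C j = set0) ->
  (forall i, S (xi i)) -> S h ->
  (forall i x, C i x -> f x = xi i x) -> (forall x, (forall i, ~ C i x) -> f x = h x) ->
  S f.
Proof.
move=> bS; elim => [|m IH] C xi h f mC disj Sxi Sh agr out.
  have -> : f = h by apply: funext => x; apply: out => -[].
  done.
pose c := C ord_max.
pose f' := paste c h f.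
have Sf' : S f'.
  apply: (IH (fun i => C (widen_ord (leqnSn m) i)) (fun i => xi (widen_ord (leqnSn m) i)) h) => //.
  - move=> i j ij; apply: disj; apply: contra ij => /eqP h1.
    by apply/eqP/val_inj; move: h1 => /(congr1 val).
  - move=> i x Cix; rewrite /f' /paste; case: asboolP => cx.
      have := disj (widen_ord (leqnSn m) i) ord_max.
      rewrite neq_ltn /= ltn_ord => /(_ isT); rewrite -subset0 => /(_ x) hh.
      by exfalso; apply: hh; split.
    exact: agr.
  - move=> x nC; rewrite /f' /paste; case: asboolP => cx //.
    apply: (out x) => i Ci; have [ei|[j ej]] := ord_split _ i.
      by rewrite ei in Ci.
    by rewrite ej in Ci; exact: nC Ci.
have -> : f = paste c (xi ord_max) f'.
  apply: funext => x; rewrite /paste /f' /paste; case: asboolP => cx //.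
  exact: agr.
by apply: bS; [exact: mC | exact: Sxi | exact: Sf'].
Qed.

Lemma bindec_dech S (x0 : Omega) : bindec S -> dech S `<=` S.
Proof.
move=> bS f [m [C [xi [mC disj cov Sxi ->]]]].
have [i0 Ci0] := cov x0.
apply: (bindec_step _ bS _ _ _ _ _ mC disj Sxi (Sxi i0)).
- by move=> i x Cix; rewrite (dec_value _ _ xi x i disj Cix).
- by move=> x nC; have [i Ci] := cov x; exfalso; exact: nC Ci.
Qed.

Lemma convh_binconv B t f g : convh B f -> convh B g -> 0 <= t <= 1 ->
  convh B (fun x => t *: f x + (1 - t) *: g x).
Proof.
move=> [n [la [a [la0 la1 Ba ->]]]] [k [lb [b [lb0 lb1 Bb ->]]]] /andP[t0 t1].
pose lam (i : 'I_n + 'I_k) := match i with inl i => t * la i | inr j => (1 - t) * lb j end.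
pose xi (i : 'I_n + 'I_k) := match i with inl i => a i | inr j => b j end.
have -> : (fun x => t *: \sum_(i < n) la i *: a i x + (1 - t) *: \sum_(i < k) lb i *: b i x)
  = fun x => \sum_i lam i *: xi i x.
  apply: funext => x; rewrite big_sumType /= !scaler_sumr.
  by congr (_ + _); apply: eq_bigr => i _; rewrite scalerA.
apply: convhI.
- by case=> i /=; apply: mulr_ge0 => //; rewrite subr_ge0.
- by rewrite big_sumType /= -!mulr_sumr la1 lb1 !mulr1 addrC subrK.
- by case.
Qed.

Lemma Y_binconv B : binconv (dech (convh B)).
Proof.
move=> f g t [m [C [a [mC dC cC Ba ->]]]] [k [D [b [mD dD cD Bb ->]]]] t01.
pose CC (p : 'I_m * 'I_k) := C p.1 `&` D p.2.
apply: (dechI _ _ CC (fun p => fun x => t *: a p.1 x + (1 - t) *: b p.2 x)).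
- by move=> p; apply: measurableI.
- move=> [i j] [i' j'] ne; rewrite /CC /=.
  have [ii|ii] := eqVneq i i'.
    have jj : j != j' by apply: contra ne => /eqP ->; rewrite ii.
    by apply/seteqP; split => x // [[_ Dj] [_ Dj']]; rewrite -(dD _ _ jj); split.
  by apply/seteqP; split => x // [[Ci _] [Ci' _]]; rewrite -(dC _ _ ii); split.
- by move=> x; have [i Ci] := cC x; have [j Dj] := cD x; exists (i, j); split.
- by move=> p; apply: convh_binconv.
- move=> [i j] x [Ci Dj] /=.
  by rewrite (dec_value _ _ a x i dC Ci) (dec_value _ _ b x j dD Dj).
Qed.

Lemma Y_bindec B : bindec (dech (convh B)).
Proof.
move=> S f g mS [m [C [a [mC dC cC Ba ->]]]] [k [D [b [mD dD cD Bb ->]]]].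
pose CC (p : 'I_m + 'I_k) := match p with inl i => S `&` C i | inr j => ~` S `&` D j end.
pose xi (p : 'I_m + 'I_k) := match p with inl i => a i | inr j => b j end.
apply: (dechI _ _ CC xi).
- by case=> i /=; apply: measurableI => //; exact: measurableC.
- case=> [i|j] [i'|j'] ne /=.
  + have ii : i != i' by apply: contra ne => /eqP ->.
    by apply/seteqP; split => x // [[_ Ci] [_ Ci']]; rewrite -(dC _ _ ii); split.
  + by apply/seteqP; split => x // [[Sx _] [nSx _]].
  + by apply/seteqP; split => x // [[nSx _] [Sx _]].
  + have jj : j != j' by apply: contra ne => /eqP ->.
    by apply/seteqP; split => x // [[_ Dj] [_ Dj']]; rewrite -(dD _ _ jj); split.
- move=> x; have [Sx|nSx] := pselect (S x).
    by have [i Ci] := cC x; exists (inl i); split.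
  by have [j Dj] := cD x; exists (inr j); split.
- by case.
- case=> [i|j] x /= [Sx Cx]; rewrite /paste; case: asboolP => // _.
    exact: (dec_value _ _ a x i dC Cx).
  exact: (dec_value _ _ b x j dD Cx).
Qed.

End Alg2.

Section Prob.
Context {R : realType} {E : normedModType R} {d : measure_display}
  {Omega : measurableType d} (P : probability Omega R).
Context (hsep : exists D : set E, countable D /\ dense D).
Implicit Types (B S X : set (Omega -> E)) (f g : Omega -> E).

Definition psmall (A : nat -> set Omega) :=
  forall dl : R, 0 < dl -> \forall n \near \oo, (P (A n) <= dl%:E)%E.

Definition bad (u : nat -> Omega -> E) f (e : R) n := [set x | e < `|u n x - f x|].

Lemma meas_gt (h : Omega -> E) (e : R) : L0 h -> measurable [set x | e < `|h x|].
Proof.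
move=> mh.
rewrite (_ : [set x | _] = setT `&` (fun x => `|h x|) @^-1` `]e, +oo[%classic).
  exact: (L0_norm_meas _ mh measurableT _ (measurable_itv _)).
by apply/seteqP; split => x /=; rewrite in_itv /= andbT // => -[].
Qed.

Lemma meas_bad u f e n : L0 (u n) -> L0 f -> measurable (bad u f e n).
Proof. by move=> mu mf; apply: meas_gt; exact: L0B. Qed.

Lemma cvg_probP u f : (forall n, L0 (u n)) -> L0 f ->
  cvg_prob P u f <-> forall e, 0 < e -> psmall (bad u f e).
Proof.
move=> mu mf; have mb e n : measurable (bad u f e n) by exact: meas_bad.
split=> H e e0.
- move=> dl dl0; have := H e e0; move/fine_cvgP => [hfin hc].
  move/cvgrPdist_le : hc => /(_ dl dl0) hc.
  apply: filterS hc => n hn.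
  have fn : P (bad u f e n) \is a fin_num by apply: fin_num_measure.
  rewrite -(fineK fn) lee_fin.
  by move: hn; rewrite sub0r normrN => /(le_trans (ler_norm _)).
- apply/fine_cvgP; split.
    by apply: filterE => n; exact: (fin_num_measure P _ (mb e n)).
  apply/(@cvgrPdist_le _ R^o) => dl dl0; have := H e e0 dl dl0; apply: filterS => n hn.
  have fn : P (bad u f e n) \is a fin_num by apply: fin_num_measure.
  rewrite sub0r normrN ger0_norm; first by rewrite -lee_fin fineK.
  by apply: fine_ge0; exact: measure_ge0.
Qed.

Lemma psmall_union (A B C : nat -> set Omega) :
  (forall n, measurable (A n)) -> (forall n, measurable (B n)) ->
  (forall n, measurable (C n)) -> (forall n, A n `<=` B n `|` C n) ->
  psmall B -> psmall C -> psmall A.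
Proof.
move=> mA mB mC sub hB hC dl dl0.
have dl2 : 0 < dl / 2 by rewrite divr_gt0.
have hB' := hB _ dl2; have hC' := hC _ dl2.
near=> n.
apply: (le_trans (le_measure P _ _ (sub n))); rewrite ?inE //; first exact: measurableU.
apply: (le_trans (measureU2 P (mB n) (mC n))).
rewrite [dl](splitr dl) EFinD; apply: leeD.
  by near: n; exact: hB'.
by near: n; exact: hC'.
Unshelve. all: by end_near.
Qed.

Lemma cvg_prob_cst f : cvg_prob P (fun _ => f) f.
Proof.
move=> e e0.
rewrite (_ : (fun _ => _) = fun _ => 0%E); first exact: cvg_cst.
apply: funext => n; rewrite (_ : [set x | _] = set0) ?measure0 //.
by apply/seteqP; split => x //=; rewrite subrr normr0 ltNge (ltW e0).
Qed.

Lemma cl0_mono X X' : X `<=` X' -> cl0 P X `<=` cl0 P X'.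
Proof. by move=> XX f [Lf [u [Xu cu]]]; split => //; exists u; split => // n; apply: XX. Qed.

Lemma convh_mono B B' : B `<=` B' -> convh B `<=` convh B'.
Proof. by move=> BB f [n [l [xi [l0 l1 Bx ->]]]]; exists n, l, xi; split => // i; apply: BB. Qed.

Lemma dech_mono B B' : B `<=` B' -> dech B `<=` dech B'.
Proof. by move=> BB f [n [l [xi [l0 l1 l2 Bx ->]]]]; exists n, l, xi; split => // i; apply: BB. Qed.

Lemma chcd0_mono B B' : B `<=` B' -> chcd0 P B `<=` chcd0 P B'.
Proof. by move=> BB; apply: cl0_mono; apply: dech_mono; apply: convh_mono. Qed.

Lemma convh_L0 B : B `<=` L0 -> convh B `<=` L0.
Proof.
move=> BL f [n [l [xi [l0 l1 Bx ->]]]].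
by apply: L0_sum => // i; apply: L0Z; apply: BL.
Qed.

Lemma dech_L0 B : B `<=` L0 -> dech B `<=` L0.
Proof.
move=> BL f [n [C [xi [mC _ _ Bx ->]]]].
apply: L0_sum => // i.
rewrite (_ : (fun x => _) = paste (C i) (xi i) (fun _ => 0)).
  by apply: L0paste => //; [apply: BL | exact: L0cst].
apply: funext => x; rewrite /paste; case: asboolP => Cx.
  by rewrite indic_in // scale1r.
by rewrite indic_out // scale0r.
Qed.

Lemma chcd0_ext B : B `<=` L0 -> B `<=` chcd0 P B.
Proof.
move=> BL f Bf; split; first exact: BL.
exists (fun _ => f); split; last exact: cvg_prob_cst.
move=> _; exists 1%N, (fun _ => setT), (fun _ => f); split => //.
- by move=> i j; rewrite (ord1 i) (ord1 j) eqxx.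
- by move=> x; exists ord0.
- exists 1%N, (fun _ => 1), (fun _ => f); split => //; first by rewrite big_ord1.
  by apply: funext => x; rewrite big_ord1 scale1r.
- by apply: funext => x; rewrite big_ord1 indic_in // scale1r.
Qed.

Lemma Omega_inh : exists x : Omega, True.
Proof.
apply: contrapT => H.
have : P setT = P set0.
  by congr (P _); apply/seteqP; split => x // _; apply: H; exists x.
by rewrite probability_setT measure0 => /eqP; rewrite eqe oner_eq0.
Qed.

Lemma cl0_binconv S : S `<=` L0 -> binconv S -> binconv (cl0 P S).
Proof.
move=> SL bS f g t [Lf [u [Su cu]]] [Lg [v [Sv cv]]] t01.
have Lu n : L0 (u n) by apply: SL.
have Lv n : L0 (v n) by apply: SL.
have Lc (a b : Omega -> E) : L0 a -> L0 b -> L0 (fun x => t *: a x + (1 - t) *: b x).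
  by move=> ma mb; apply: L0D => //; apply: L0Z.
split; first exact: Lc.
exists (fun n x => t *: u n x + (1 - t) *: v n x); split.
  by move=> n; apply: bS.
apply/cvg_probP; [by move=> n; apply: Lc | by apply: Lc | move=> e e0].
have hu := (iffLR (cvg_probP _ _ Lu Lf) cu) e e0.
have hv := (iffLR (cvg_probP _ _ Lv Lg) cv) e e0.
apply: (psmall_union _ _ _ _ (fun n => meas_bad _ _ _ _ (Lu n) Lf) (fun n => meas_bad _ _ _ _ (Lv n) Lg) _ hu hv).
  by move=> n; apply: meas_bad => //; apply: Lc.
move=> n x /=; case: (leP `|u n x - f x| e) => h1; last by left.
case: (leP `|v n x - g x| e) => h2; last by right.
move=> h; exfalso; move: h; apply/negP; rewrite -leNgt.
case/andP: t01 => t0 t1.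
rewrite opprD addrACA -!scalerBr.
apply: (le_trans (ler_normD _ _)); rewrite !normrZ !ger0_norm ?subr_ge0 //.
nra.
Qed.

Lemma cl0_bindec S : S `<=` L0 -> bindec S -> bindec (cl0 P S).
Proof.
move=> SL bS C f g mC [Lf [u [Su cu]]] [Lg [v [Sv cv]]].
have Lu n : L0 (u n) by apply: SL.
have Lv n : L0 (v n) by apply: SL.
split; first exact: L0paste.
exists (fun n => paste C (u n) (v n)); split.
  by move=> n; apply: bS.
apply/cvg_probP; [by move=> n; apply: L0paste | by apply: L0paste | move=> e e0].
have hu := (iffLR (cvg_probP _ _ Lu Lf) cu) e e0.
have hv := (iffLR (cvg_probP _ _ Lv Lg) cv) e e0.
apply: (psmall_union _ _ _ _ (fun n => meas_bad _ _ _ _ (Lu n) Lf) (fun n => meas_bad _ _ _ _ (Lv n) Lg) _ hu hv).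
  by move=> n; apply: meas_bad => //; apply: L0paste.
move=> n x h; rewrite /bad /paste /= in h; have [Cx|Cx] := pselect (C x).
  by left; move: h; rewrite asboolT.
by right; move: h; rewrite asboolF.
Qed.

Lemma cl0_idem X : X `<=` L0 -> cl0 P (cl0 P X) `<=` cl0 P X.
Proof.
move=> XL f [Lf [u [Su cu]]].
have Lu n : L0 (u n) by case: (Su n).
have hv : forall k, exists v : nat -> Omega -> E, (forall n, X (v n)) /\ cvg_prob P v (u k).
  by move=> k; case: (Su k) => _ [v hv]; exists v.
have [V hV] := choice hv.
have LV k n : L0 (V k n) by apply: XL; case: (hV k) => h _; exact: h.
have hN : forall k, exists N : nat,
    (P (bad (V k) (u k) k.+1%:R^-1 N) <= (k.+1%:R^-1)%:E)%E.
  move=> k; have [_ cV] := hV k.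
  have k0 : 0 < k.+1%:R^-1 :> R by rewrite invr_gt0 ltr0n.
  have [N _ hN] := (iffLR (cvg_probP _ _ (LV k) (Lu k)) cV) _ k0 _ k0.
  by exists N; exact: (hN N (leqnn N)).
have [N hN'] := choice hN.
split => //; exists (fun k => V k (N k)); split.
  by move=> k; case: (hV k) => h _; exact: h.
apply/cvg_probP; [by move=> k; apply: LV | exact: Lf | move=> e e0].
have e2 : 0 < e / 2 by rewrite divr_gt0.
have hu := (iffLR (cvg_probP _ _ Lu Lf) cu) _ e2.
apply: (psmall_union _ (fun k => [set x | e / 2 < `|V k (N k) x - u k x|])
   _ _ _ (fun n => meas_bad _ _ _ _ (Lu n) Lf) _ _ hu).
- by move=> n; apply: meas_bad.
- by move=> n; apply: meas_gt; apply: L0B.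
- move=> n x /=; case: (leP `|V n (N n) x - u n x| (e / 2)) => h1; last by left.
  case: (leP `|u n x - f x| (e / 2)) => h2; last by right.
  move=> h; exfalso; move: h; apply/negP; rewrite -leNgt.
  rewrite -(subrKA (u n x)); apply: (le_trans (ler_normD _ _)).
  by rewrite [e](splitr e); apply: lerD.
- move=> dl dl0.
  have h1 := near_infty_natSinv_lt (PosNum e2).
  have h2 := near_infty_natSinv_lt (PosNum dl0).
  near=> k.
  have k1 : k.+1%:R^-1 < e / 2 by near: k; exact: h1.
  have k2 : k.+1%:R^-1 < dl by near: k; exact: h2.
  apply: (le_trans _ (le_trans (hN' k) _)); last by rewrite lee_fin ltW.
  apply: le_measure; rewrite ?inE; [by apply: meas_gt; apply: L0B| |].
    exact: meas_bad.
  by move=> x /= hx; apply: lt_trans hx.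
Unshelve. all: by end_near.
Qed.

Lemma chcd0_idem B : B `<=` L0 -> chcd0 P (chcd0 P B) `<=` chcd0 P B.
Proof.
move=> BL.
have YL : dech (convh B) `<=` L0 by apply: dech_L0; apply: convh_L0.
have bcZ : binconv (chcd0 P B) := cl0_binconv _ YL (Y_binconv B).
have bdZ : bindec (chcd0 P B) := cl0_bindec _ YL (Y_bindec B).
have [x0 _] := Omega_inh.
have sub : dech (convh (chcd0 P B)) `<=` chcd0 P B.
  move=> f hf; apply: (bindec_dech _ x0 bdZ).
  by apply: dech_mono hf; apply: binconv_convh.
by move=> f hf; apply: (cl0_idem _ YL); apply: cl0_mono hf.
Qed.

Lemma pow_meas (q : R) f : L0 f ->
  measurable_fun setT (fun x => (`|f x| `^ q)%:E).
Proof.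
move=> mf; apply/measurable_EFinP.
exact: (measurableT_comp (measurable_realfun.measurable_powR q) (L0_norm_meas _ mf)).
Qed.

Lemma Lq_bound (q q' c : R) g (h : Omega -> E) : L0 g -> Lq P q' h -> 0 <= c ->
  (forall x, `|g x| `^ q <= c + `|h x| `^ q') -> Lq P q g.
Proof.
move=> mg [mh hi] c0 le; split => //.
have eq := ge0_integralD P measurableT (f1 := fun=> c%:E)
   (f2 := fun x => (`|h x| `^ q')%:E) (fun x _ => ltac:(by rewrite lee_fin))
   (measurable_cst _) (fun x _ => ltac:(by rewrite lee_fin powR_ge0))
   (pow_meas q' h mh).
rewrite /= in eq.
have hb : (\int[P]_x (c%:E + (`|h x| `^ q')%:E) < +oo)%E.
  rewrite eq integral_cst //; match goal with |- context [(_ * ?b)%E] => have -> : b = 1%E by exact: probability_setT end; rewrite mule1.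
  by rewrite lte_add_pinfty // ltry.
apply: le_lt_trans hb.
apply: (ge0_le_integral P measurableT).
- by move=> x _; rewrite lee_fin powR_ge0.
- exact: pow_meas.
- by apply: emeasurable_funD; [exact: measurable_cst | exact: pow_meas].
- by move=> x _; rewrite -EFinD lee_fin.
Qed.

Lemma Lq_mono (s p : R) : 1 <= s -> s <= p -> @Lq R E d Omega P p `<=` Lq P s.
Proof.
move=> s1 sp f hf; apply: (Lq_bound _ p 1 f f) => //; first by case: hf.
move=> x; have := powR_ge0 `|f x| p; have [le|lt] := leP `|f x| 1 => h0.
  have h1 : `|f x| `^ s <= 1.
    rewrite (_ : 1 = 1 `^ s); last by rewrite powR1.
    apply: ge0_ler_powR => //; first by apply: le_trans s1.
    by rewrite nnegrE.
    by rewrite nnegrE.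
  lra.
have h1 : `|f x| `^ s <= `|f x| `^ p by apply: ler_powR => //; exact: ltW.
lra.
Qed.


Lemma sub_dc S : S `<=` dech (convh S).
Proof.
move=> f Sf; exists 1%N, (fun _ => setT), (fun _ => f); split => //.
- by move=> i j; rewrite (ord1 i) (ord1 j) eqxx.
- by move=> x; exists ord0.
- exists 1%N, (fun _ => 1), (fun _ => f); split => //; first by rewrite big_ord1.
  by apply: funext => x; rewrite big_ord1 scale1r.
- by apply: funext => x; rewrite big_ord1 indic_in // scale1r.
Qed.

Lemma chcd0_bindec B : B `<=` L0 -> bindec (chcd0 P B).
Proof.
move=> BL; apply: cl0_bindec; [apply: dech_L0; exact: convh_L0 | exact: Y_bindec].
Qed.

Lemma cvg0_psmall (F : nat -> set Omega) : (forall n, measurable (F n)) ->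
  (fun n => P (F n)) @ \oo --> 0%E -> psmall F.
Proof.
move=> mF /fine_cvgP [_ hc] dl dl0.
move/cvgrPdist_le : hc => /(_ dl dl0) hc.
apply: filterS hc => n hn.
have fn : P (F n) \is a fin_num by apply: fin_num_measure.
rewrite -(fineK fn) lee_fin.
by move: hn; rewrite sub0r normrN => /(le_trans (ler_norm _)).
Qed.

Lemma psmall_tail (xi : Omega -> E) : L0 xi ->
  psmall (fun n => [set x | n%:R < `|xi x|]).
Proof.
move=> Lxi.
have mF n : measurable [set x | n%:R < `|xi x|] by apply: meas_gt.
have cap : \bigcap_n [set x | n%:R < `|xi x|] = set0.
  apply/seteqP; split => x // hx.
  have := archi_boundP (normr_ge0 (xi x)).
  set n := Num.Def.archi_bound _ => hn.
  have := hx n I; rewrite /= => h.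
  by have := lt_trans h hn; rewrite ltxx.
apply: cvg0_psmall => //.
pose F n : set Omega := [set x | n%:R < `|xi x|].
have h1 : (P (F 0%N) < +oo)%E.
  by rewrite -ge0_fin_numE //; exact: (fin_num_measure P _ (mF 0%N)).
have h2 : measurable (\bigcap_n [set x | n%:R < `|xi x|]) by rewrite cap.
have h3 : nonincreasing_seq (fun n => [set x | n%:R < `|xi x|]).
  move=> n m nm; apply/subsetPset => x /= h; apply: le_lt_trans h; by rewrite ler_nat.
have hc := @nonincreasing_cvg_mu _ _ _ P (fun n => [set x | n%:R < `|xi x|]) h1 mF h2 h3.
rewrite (_ : \bigcap_n _ = set0) ?measure0 in hc; first exact: hc.
exact: cap.
Qed.

Lemma trunc_cl0 B (xi eta : Omega -> E) (p : R) : B `<=` L0 -> 0 <= p ->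
  B xi -> chcdq P p B eta -> cl0 P (chcdq P p B) xi.
Proof.
move=> BL p0 Bxi [Zeta Lpeta].
have Lxi : L0 xi := BL _ Bxi.
have Leta : L0 eta by case: Lpeta.
pose T (n : nat) := [set x | `|xi x| <= n%:R].
have mT n : measurable (T n).
  rewrite (_ : T n = ~` [set x | n%:R < `|xi x|]).
    by apply: measurableC; apply: meas_gt.
  apply/seteqP; split => x /=.
    by move=> h; apply/negP; rewrite -leNgt.
  by move/negP; rewrite -leNgt.
pose w n := paste (T n) xi eta.
have Lw n : L0 (w n) by apply: L0paste.
split => //; exists w; split.
  move=> n; split.
    rewrite /w; apply: (chcd0_bindec _ BL) => //; exact: chcd0_ext.
  apply: (Lq_bound _ p (n%:R `^ p) (w n) eta (Lw n) Lpeta (powR_ge0 _ _)).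
  move=> x; have := powR_ge0 `|eta x| p; have := powR_ge0 n%:R p.
  rewrite /w /paste; case: asboolP => Tx h1 h2.
    have : `|xi x| `^ p <= n%:R `^ p.
      by apply: ge0_ler_powR => //; rewrite nnegrE.
    lra.
  lra.
apply/cvg_probP => // e e0.
have h0 : psmall (fun _ : nat => @set0 Omega).
  by move=> dl dl0; apply: filterE => n; rewrite measure0 lee_fin ltW.
apply: (psmall_union _ _ _ _ (fun n => meas_gt _ _ Lxi) (fun _ => measurable0) _
   (psmall_tail _ Lxi) h0).
  by move=> n; apply: meas_bad.
move=> n x; rewrite /bad /w /paste /= => h; left.
move: h; have [Tx|Tx] := pselect (T n x).
  by rewrite asboolT // subrr normr0 ltNge (ltW e0).
by move: Tx; rewrite /T /= leNgt => /negP; rewrite negbK.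
Qed.

Lemma part1 B (p : R) : B `<=` L0 -> 0 <= p -> chcdq P p B !=set0 ->
  chcd0 P (chcdq P p B) = chcd0 P B.
Proof.
move=> BL p0 [eta heta].
have qL : chcdq P p B `<=` L0 by move=> f [[]].
apply/seteqP; split.
  move=> f hf; apply: (chcd0_idem _ BL); apply: (chcd0_mono _ _ _ _ hf) => g [].
  done.
have sub : B `<=` chcd0 P (chcdq P p B).
  move=> xi Bxi; apply: (cl0_mono _ _ _ _ (trunc_cl0 _ _ _ _ BL p0 Bxi heta)).
  exact: sub_dc.
move=> f hf; apply: (chcd0_idem _ qL); apply: (chcd0_mono _ _ _ _ hf); exact: sub.
Qed.

End Prob.

Theorem mainTheorem18 (R : realType) (E : completeNormedModType R)
  (hsep : exists D : set E, countable D /\ dense D)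
  (d : measure_display) (Omega : measurableType d) (P : probability Omega R)
  (hcomp : measure_is_complete P)
  (A : set (Omega -> E)) (s p : R) :
  A !=set0 -> A `<=` L0 -> 1 <= s -> s <= p ->
  [/\ chcdq P p A !=set0 -> chcd0 P (chcdq P p A) = chcd0 P A,
      chcdq P p (chcd0 P A) = chcdq P p A,
      chcdq P p (chcdq P p A) = chcdq P p A,
      chcdq P p (chcdq P s A) = chcdq P p A &
      chcdq P p A !=set0 -> chcdq P s (chcdq P p A) = chcdq P s A].
Proof.
move=> A0 AL s1 sp.
have p1 : 1 <= p by apply: le_trans sp.
have p0 : 0 <= p by apply: le_trans p1.
have ZL : chcd0 P A `<=` L0 by move=> f [].
have idem : chcd0 P (chcd0 P A) = chcd0 P A.
  apply/seteqP; split; [exact: chcd0_idem | exact: chcd0_ext].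
have P1 : chcdq P p A !=set0 -> chcd0 P (chcdq P p A) = chcd0 P A.
  exact: part1.
split.
- exact: P1.
- by rewrite /chcdq idem.
- rewrite {1}/chcdq; apply/seteqP; split.
    move=> f [hf Lf]; split => //; rewrite -idem; apply: (chcd0_mono P _ _ _ _ hf) => g [].
    done.
  move=> f hf; split; last by case: hf.
  apply: chcd0_ext => //; by move=> g [[]].
- rewrite {1}/chcdq; apply/seteqP; split.
    move=> f [hf Lf]; split => //; rewrite -idem; apply: (chcd0_mono P _ _ _ _ hf) => g [].
    done.
  move=> f [hf Lf]; split => //.
  apply: chcd0_ext; first by move=> g [[]].
  by split => //; apply: (Lq_mono P _ _ s1 sp).
- by move=> ne; rewrite {1}/chcdq (P1 ne).
Qed.
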